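(* Let $G$ be the cube graph $Q_3$, let $P$ be a pot realizing $G$ according to Scenario 3, and let $\lambda$ be an assembly design of $G$ with $P_\lambda(G)\subseteq P$. Then every tile $t\in P$ satisfies $\lambda(v)=t$ for at most two distinct vertices $v$ of $G$.
   Context: Fix a set $\Sigma$ of symbols (bond-edge types) and a disjoint copy $\hat\Sigma=\{\hat a:a\in\Sigma\}$ with $\hat{\hat a}=a$; elements of $\Sigma\cup\hat\Sigma$ are cohesive-end types. A tile is a finite multiset of cohesive-end types. A pot is a finite set $P$ of tiles such that whenever $x$ occurs in a tile of $P$, $\hat x$ occurs in some tile of $P$. Graphs are finite, loops and multiple edges allowed. An assembly design of a graph $H$ is a labeling $\lambda$ of the half-edges of $H$ by cohesive-end types such that the two half-edges of each edge receive complementary labels $x,\hat x$; $\lambda(v)=t_v$ is the multiset of labels of half-edges at $v$, and $P_\lambda(H)=\{t_v\}$. $P$ realizes $H$ ($H\in\mathcal{O}(P)$) if some assembly design $\lambda$ has $P_\lambda(H)\subseteq P$. $P$ realizes $G$ according to Scenario 3 if $G\in\mathcal{O}(P)$, every $H\in\mathcal{O}(P)$ has $\#V(H)\ge\#V(G)$, and every $H\in\mathcal{O}(P)$ with $\#V(H)=\#V(G)$ is isomorphic to $G$. *)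

(* Defs.v *)
From mathcomp Require Import all_boot.
Set Implicit Arguments. Unset Strict Implicit. Unset Printing Implicit Defensive.

Section Defs.
Variable Sigma : eqType.

(* cohesive-end type: (a, false) = a, (a, true) = hat a *)
Definition cet := (Sigma * bool)%type.
Definition compl (x : cet) : cet := (x.1, ~~ x.2).

(* a tile is a finite multiset of cohesive-end types, represented by a
   sequence up to permutation (perm_eq) *)
Definition tile := seq cet.

Definition tile_in (t : tile) (P : seq tile) : bool := has (perm_eq t) P.

Definition is_pot (P : seq tile) : Prop :=
  forall t x, t \in P -> x \in t -> exists2 t', t' \in P & compl x \in t'.
End Defs.

(* finite graph with loops and multiple edges: vertices 'I_nv, edges listed
   (with multiplicity) as pairs of endpoints; edge i has a first half-edge at
   its first endpoint and a second half-edge at its second endpoint. *)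
Record graph := Graph { nv : nat; edges : seq ('I_nv * 'I_nv) }.

Definition edge_ix (G : graph) := 'I_(size (edges G)).

(* An assembly design is given by the label of the first half-edge of every
   edge; the second half-edge gets the complementary label. *)
Definition design (Sigma : eqType) (G : graph) := edge_ix G -> cet Sigma.

Definition tile_at (Sigma : eqType) (G : graph) (lam : design Sigma G)
  (v : 'I_(nv G)) : tile Sigma :=
  flatten [seq (if (nth (v, v) (edges G) (val i)).1 == v then [:: lam i] else [::])
            ++ (if (nth (v, v) (edges G) (val i)).2 == v then [:: compl (lam i)] else [::])
          | i : edge_ix G <- enum 'I_(size (edges G))].

Definition design_in (Sigma : eqType) (G : graph) (lam : design Sigma G)
  (P : seq (tile Sigma)) : Prop :=
  forall v : 'I_(nv G), tile_in (tile_at lam v) P.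

Definition realizes (Sigma : eqType) (P : seq (tile Sigma)) (H : graph) : Prop :=
  exists lam : design Sigma H, design_in lam P.

(* number of edges joining u and v (a loop at u counts once for u = v) *)
Definition mult (G : graph) (u v : 'I_(nv G)) : nat :=
  count (fun e => (e == (u, v)) || (e == (v, u))) (edges G).

Definition isomorphic (G H : graph) : Prop :=
  exists f : 'I_(nv G) -> 'I_(nv H),
    bijective f /\ forall u v, mult u v = mult (f u) (f v).

Definition scenario3 (Sigma : eqType) (P : seq (tile Sigma)) (G : graph) : Prop :=
  [/\ realizes P G,
      (forall H : graph, 0 < nv H -> realizes P H -> nv G <= nv H) &
      (forall H : graph, 0 < nv H -> realizes P H -> nv H = nv G -> isomorphic H G)].

(* the cube graph Q3 on vertices 0..7, u ~ v iff binary expansions differ in one bit *)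
Definition Q3_edges : seq ('I_8 * 'I_8) :=
  [seq (inord p.1, inord p.2) | p <- [:: (0,1); (0,2); (0,4); (1,3); (1,5); (2,3);
                                         (2,6); (3,7); (4,5); (4,6); (5,7); (6,7)]].
Definition Q3 : graph := @Graph 8 Q3_edges.

(* Main.v *)
Require Import Defs.
From mathcomp Require Import all_boot.
Set Implicit Arguments. Unset Strict Implicit. Unset Printing Implicit Defensive.

Definition L3 : seq (nat * nat) := [:: (0,1); (0,2); (0,4); (1,3); (1,5); (2,3);
                                         (2,6); (3,7); (4,5); (4,6); (5,7); (6,7)].
Definition HN := (nat * bool)%type.
Definition epn (h : HN) : nat := let p := nth (0,0) L3 h.1 in if h.2 then p.2 else p.1.
Definition taun (h1 h2 h : HN) : HN := if h == h1 then h2 else if h == h2 then h1 else h.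
Definition swn (h1 h2 : HN) : seq (nat * nat) :=
  [seq (epn (taun h1 h2 (k, false)), epn (taun h1 h2 (k, true))) | k <- iota 0 12].
Definition multn (E : seq (nat * nat)) (u v : nat) : nat :=
  count (fun e => (eqn e.1 u && eqn e.2 v) || (eqn e.1 v && eqn e.2 u)) E.
Definition r8 := iota 0 8.
Definition nbrs (E : seq (nat * nat)) (u : nat) : seq nat :=
  [seq (if eqn e.1 u then e.2 else e.1) | e <- E & eqn e.1 u || eqn e.2 u].
Definition badn (E : seq (nat * nat)) : bool :=
  if has (fun e => eqn e.1 e.2) E then true else
  if has (fun e => 1 < multn E e.1 e.2) E then true else
  has (fun e => has (fun w => [&& ~~ eqn e.1 e.2, ~~ eqn w e.1, ~~ eqn w e.2 & w \in nbrs E e.2]) (nbrs E e.1)) E.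
Definition allh : seq HN := [seq (k, s) | k <- iota 0 12, s <- [:: false; true]].
Definition halfsn (A : nat) : seq HN := [seq h <- allh | epn h == A].
Definition hn (A k : nat) : HN := nth (0, false) (halfsn A) k.
Definition oppn (h : HN) : HN := (h.1, ~~ h.2).
Definition P3 := permutations (iota 0 3).
Definition condn A B C (s r : seq nat) :=
  all (fun k => [&& oppn (hn A k) != hn B (nth 0 s k), oppn (hn A k) != hn C (nth 0 r k) &
                    oppn (hn B (nth 0 s k)) != hn C (nth 0 r k)]) (iota 0 3).
Definition goodn A B C (s r : seq nat) :=
  has (fun k => if badn (swn (hn A k) (hn B (nth 0 s k))) then true else
     if badn (swn (hn A k) (hn C (nth 0 r k))) then true else
     badn (swn (hn B (nth 0 s k)) (hn C (nth 0 r k)))) (iota 0 3).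
Definition chk A B C := all (fun s => all (fun r => if condn A B C s r then goodn A B C s r else true) P3) P3.
Definition master_b : bool :=
  all (fun A => all (fun B => all (fun C => if [&& A != B, A != C & B != C] then chk A B C else true) r8) r8) r8.
Lemma master : master_b. Proof. vm_cast_no_check (erefl true). Qed.

Lemma count_tile (Sigma : eqType) (G : graph) (lam : design Sigma G) v (a : pred (cet Sigma)) :
  count a (tile_at lam v) = \sum_(i : edge_ix G)
    ((((nth (v,v) (edges G) i).1 == v) && a (lam i)) +
     (((nth (v,v) (edges G) i).2 == v) && a (compl (lam i)))).
Proof.
rewrite /tile_at count_flatten sumnE !big_map.
apply: congr_big => //.
move=> i _; rewrite count_cat.
by case: (_ == v); case: (_ == v); rewrite /= ?addn0.
Qed.

Lemma sum_count (T : Type) (s : seq T) (b : pred T) : \sum_(x <- s) (b x : nat) = count b s.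
Proof. by elim: s => [|x s IH]; rewrite ?big_nil ?big_cons ?IH. Qed.

Lemma L3_lt : all (fun p => (p.1 < 8) && (p.2 < 8)) L3. Proof. by []. Qed.

Lemma epn_lt h : epn h < 8.
Proof.
case: h => k s; rewrite /epn /=.
case: (ltnP k (size L3)) => hk.
  by move/allP: L3_lt => /(_ _ (mem_nth (0,0) hk)) /andP[h1 h2]; case: s.
by rewrite nth_default //; case: s.
Qed.

Definition o8 (x : nat) : 'I_8 := Ordinal (ltn_pmod x (isT : 0 < 8)).
Definition o12 (x : nat) : 'I_12 := Ordinal (ltn_pmod x (isT : 0 < 12)).
Definition labn (Sigma : eqType) (lam : 'I_12 -> cet Sigma) (h : HN) : cet Sigma :=
  if h.2 then compl (lam (o12 h.1)) else lam (o12 h.1).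

Lemma eq_o8 x (v : 'I_8) : x < 8 -> (o8 x == v) = (x == val v).
Proof. by move=> hx; rewrite -val_eqE /= modn_small. Qed.

Lemma eq_inord x (v : 'I_8) : x < 8 -> (inord x == v) = (x == val v).
Proof. by move=> hx; rewrite -val_eqE /= inordK. Qed.

Lemma o12K (i : 'I_12) : o12 i = i.
Proof. by apply: val_inj; rewrite /= modn_small. Qed.

Lemma Q3E : Q3_edges = [seq (inord p.1, inord p.2) | p <- L3].
Proof. by []. Qed.

Lemma nthQ (v : 'I_8) (i : 'I_12) :
  nth (v,v) Q3_edges i = (inord (epn (val i,false)), inord (epn (val i,true))).
Proof. by rewrite Q3E (nth_map (0,0)). Qed.

Lemma tileQ (Sigma : eqType) (lam : design Sigma Q3) (v : 'I_8) (a : pred (cet Sigma)) :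
  count a (tile_at lam v) = count (fun h => (epn h == val v) && a (labn lam h)) allh.
Proof.
rewrite count_tile -sum_count big_allpairs.
change (iota 0 12) with (index_iota 0 12); rewrite big_mkord.
apply: eq_bigr => i _; rewrite big_cons big_cons big_nil /=.
by rewrite addn0 (nthQ v i) /= !eq_inord ?epn_lt // /labn /= (o12K i).
Qed.

Definition HG (h1 h2 : HN) : graph := @Graph 8 [seq (o8 p.1, o8 p.2) | p <- swn h1 h2].

Lemma taunK h1 h2 : involutive (taun h1 h2).
Proof.
move=> h; rewrite /taun.
have [->|n1] := eqVneq h h1.
  by rewrite eqxx; have [->|] := eqVneq h2 h1; rewrite ?eqxx.
have [->|n2] := eqVneq h h2; first by rewrite eqxx.
by rewrite (negbTE n1) (negbTE n2).
Qed.

Lemma nthH h1 h2 (v : 'I_8) k : k < 12 ->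
  nth (v,v) (edges (HG h1 h2)) k = (o8 (epn (taun h1 h2 (k,false))), o8 (epn (taun h1 h2 (k,true)))).
Proof.
move=> hk; change (nth (v,v) [seq (o8 p.1, o8 p.2) | p <- swn h1 h2] k = (o8 (epn (taun h1 h2 (k,false))), o8 (epn (taun h1 h2 (k,true))))).

rewrite (nth_map (0,0)); last by rewrite size_map size_iota.
by rewrite /swn (nth_map 0) ?size_iota // nth_iota.
Qed.

Lemma tileH (Sigma : eqType) (lam : design Sigma Q3) h1 h2 (v : 'I_8) (a : pred (cet Sigma)) :
  count a (@tile_at Sigma (HG h1 h2) lam v) =
  count (fun h => (epn (taun h1 h2 h) == val v) && a (labn lam h)) allh.
Proof.
rewrite count_tile -sum_count big_allpairs.
change (iota 0 12) with (index_iota 0 12); rewrite big_mkord.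
apply: eq_bigr => i _; rewrite big_cons big_cons big_nil.
rewrite (nthH h1 h2 v (ltn_ord i)) /= addn0.
by rewrite !eq_o8 ?epn_lt // /labn /= (o12K i).
Qed.

Lemma labn_tau (Sigma : eqType) (lam : 'I_12 -> cet Sigma) h1 h2 h :
  labn lam h1 = labn lam h2 -> labn lam (taun h1 h2 h) = labn lam h.
Proof.
move=> e; rewrite /taun.
have [->|n1] := eqVneq h h1; first by rewrite e.
by have [->|n2] := eqVneq h h2.
Qed.

Lemma perm_tau h1 h2 : h1 \in allh -> h2 \in allh -> perm_eq (map (taun h1 h2) allh) allh.
Proof.
move=> i1 i2; apply: uniq_perm.
- by rewrite (map_inj_uniq (inv_inj (taunK h1 h2))).
- by [].
move=> x; rewrite -{1}(taunK h1 h2 x) (mem_map (inv_inj (taunK h1 h2))) /taun.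
have [->|n1] := eqVneq x h1; first by rewrite i1 i2.
by have [->|n2] := eqVneq x h2; rewrite ?i1 ?i2.
Qed.

Lemma realH (Sigma : eqType) (P : seq (tile Sigma)) (lam : design Sigma Q3) h1 h2 :
  h1 \in allh -> h2 \in allh -> labn lam h1 = labn lam h2 -> design_in lam P ->
  realizes P (HG h1 h2).
Proof.
move=> i1 i2 el hd; exists (lam : design Sigma (HG h1 h2)) => v.
have := hd v; rewrite /tile_in => /hasP[t tP pt]; apply/hasP; exists t => //.
apply: perm_trans pt; apply/permP => a.
rewrite tileH (tileQ lam v).
rewrite -(permP (perm_tau i1 i2)) count_map.
apply: eq_count => h; rewrite /= taunK (labn_tau _ el).
reflexivity.
Qed.


Lemma mult_Q3 (u v : 'I_8) : mult (G:=Q3) u v = multn L3 (val u) (val v).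
Proof.
rewrite /mult /multn [edges _]/= Q3E count_map; apply: eq_in_count => p pin /=.
move/allP: L3_lt => /(_ _ pin) /andP[l1 l2].
by rewrite !xpair_eqE !eq_inord // !eqnE.
Qed.

Lemma swn_lt h1 h2 e : e \in swn h1 h2 -> (e.1 < 8) && (e.2 < 8).
Proof. by case/mapP => k _ ->; rewrite !epn_lt. Qed.

Lemma mult_H h1 h2 (u v : 'I_8) : mult (G:=HG h1 h2) u v = multn (swn h1 h2) (val u) (val v).
Proof.
rewrite /mult /multn; change (edges (HG h1 h2)) with [seq (o8 p.1, o8 p.2) | p <- swn h1 h2].
rewrite count_map; apply: eq_in_count => p pin /=.
case/andP: (swn_lt pin) => l1 l2.
by rewrite !xpair_eqE !eq_o8 // !eqnE.
Qed.

Lemma Q3loop : all (fun a => multn L3 a a == 0) r8.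
Proof. by vm_compute. Qed.
Lemma Q3simple : all (fun a => all (fun b => multn L3 a b <= 1) r8) r8.
Proof. by vm_compute. Qed.
Lemma Q3tri : all (fun a => all (fun b => all (fun c => [&& a != b, b != c & a != c] ==>
   ~~ [&& 0 < multn L3 a b, 0 < multn L3 b c & 0 < multn L3 a c]) r8) r8) r8.
Proof. by vm_compute. Qed.

Lemma nbrs_mult E x w : w \in nbrs E x -> 0 < multn E x w.
Proof.
case/mapP => e; rewrite mem_filter => /andP[he eE] ->.
rewrite /multn -has_count; apply/hasP; exists e => //.
move: he; rewrite !eqnE; case: e {eE} => a b /=.
by case: eqP => [-> _|_ /eqP ->]; rewrite ?eqxx ?orbT.
Qed.

Lemma mult_pos_lt h1 h2 x y : 0 < multn (swn h1 h2) x y -> (x < 8) && (y < 8).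
Proof.
rewrite /multn -has_count => /hasP[e eE]; case/andP: (swn_lt eE).
by rewrite !eqnE => l1 l2 /orP[] /andP[/eqP <- /eqP <-]; rewrite ?l1 ?l2.
Qed.

Lemma in_r8 (x : 'I_8) : val x \in r8.
Proof. by rewrite mem_iota ltn_ord. Qed.


Lemma noiso h1 h2 : badn (swn h1 h2) -> ~ isomorphic (HG h1 h2) Q3.
Proof.
move=> hb [f [fb hm]].
have finj := bij_inj fb.
have hmE x y : 0 < multn (swn h1 h2) x y ->
    multn (swn h1 h2) x y = multn L3 (f (o8 x)) (f (o8 y)).
  move=> /mult_pos_lt /andP[hx hy].
  by rewrite -mult_Q3 -hm mult_H /= !modn_small.
have o8inj x y : x < 8 -> y < 8 -> f (o8 x) = f (o8 y) -> x = y.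
  by move=> hx hy /finj /(congr1 val) /=; rewrite !modn_small.
have pos e : e \in swn h1 h2 -> 0 < multn (swn h1 h2) e.1 e.2.
  move=> eE; rewrite /multn -has_count; apply/hasP; exists e => //.
  by rewrite !eqnE !eqxx.
move: hb; rewrite /badn.
case: ifP => [/hasP[e eE]|_].
  rewrite eqnE => /eqP ee _; have := pos e eE; rewrite -ee => p.
  move: (p); rewrite hmE // => p'.
  by move/allP: Q3loop => /(_ _ (in_r8 (f (o8 e.1)))) /eqP q; rewrite q in p'.
case: ifP => [/hasP[e eE] lt _|_].
  have p : 0 < multn (swn h1 h2) e.1 e.2 by apply: leq_trans lt.
  move: lt; rewrite hmE // => lt.
  move/allP: Q3simple => /(_ _ (in_r8 (f (o8 e.1)))) /allP /(_ _ (in_r8 (f (o8 e.2)))).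
  by rewrite leqNgt lt.
case/hasP => e eE /hasP[w wn] /and4P[n12 nw1 nw2 wn2].
have p12 := pos e eE.
have p1w := nbrs_mult wn; have p2w := nbrs_mult wn2.
case/andP: (mult_pos_lt p12) => l1 l2; case/andP: (mult_pos_lt p1w) => _ lw.
have := p12; rewrite (hmE _ _ p12) => {}p12.
have := p1w; rewrite (hmE _ _ p1w) => {}p1w.
have := p2w; rewrite (hmE _ _ p2w) => {}p2w.
move: n12 nw1 nw2; rewrite !eqnE => n12 nw1 nw2.
move/allP: Q3tri => /(_ _ (in_r8 (f (o8 e.1)))) /allP /(_ _ (in_r8 (f (o8 e.2))))
  /allP /(_ _ (in_r8 (f (o8 w)))).
rewrite p12 p1w p2w /=.
have d12 : f (o8 e.1) != f (o8 e.2) by apply/eqP => /(o8inj _ _ l1 l2) ee; rewrite ee eqxx in n12.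
have d2w : f (o8 e.2) != f (o8 w) by apply/eqP => /(o8inj _ _ l2 lw) ee; rewrite ee eqxx in nw2.
have d1w : f (o8 e.1) != f (o8 w) by apply/eqP => /(o8inj _ _ l1 lw) ee; rewrite ee eqxx in nw1.
by rewrite d12 d2w d1w.
Qed.

Lemma halfs3 : all (fun A => size (halfsn A) == 3) r8.
Proof. by vm_compute. Qed.

Lemma size_halfs (A : 'I_8) : size (halfsn A) = 3.
Proof. by move/allP: halfs3 => /(_ _ (in_r8 A)) /eqP. Qed.

Lemma hn_allh (A : 'I_8) k : k < 3 -> hn A k \in allh.
Proof.
move=> hk; have : hn A k \in halfsn A by apply: mem_nth; rewrite size_halfs.
by rewrite mem_filter => /andP[].
Qed.

Lemma tile_perm (Sigma : eqType) (lam : design Sigma Q3) (A : 'I_8) :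
  perm_eq (tile_at lam A) (map (labn lam) (halfsn A)).
Proof.
apply/permP => a; rewrite tileQ count_map /halfsn count_filter.
by apply: eq_count => h /=; rewrite andbC.
Qed.

Lemma match3 (Sigma : eqType) (lam : design Sigma Q3) (A B : 'I_8) :
  perm_eq (map (labn lam) (halfsn A)) (map (labn lam) (halfsn B)) ->
  exists2 s, s \in P3 & forall k, k < 3 -> labn lam (hn A k) = labn lam (hn B (nth 0 s k)).
Proof.
move=> pe; have sA := size_halfs A; have sB := size_halfs B.
case/(perm_iotaP (labn lam (0,false))): pe => Is pIs eIs.
rewrite size_map sB in pIs.
exists Is; first by rewrite /P3 mem_permutations.
move=> k hk.
have hIs : size Is = 3 by rewrite (perm_size pIs) size_iota.
have nk : nth 0 Is k < 3.
  have : nth 0 Is k \in Is by apply: mem_nth; rewrite hIs.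
  by rewrite (perm_mem pIs) mem_iota.
transitivity (nth (labn lam (0,false)) (map (labn lam) (halfsn A)) k).
  by rewrite (nth_map (0,false)) // sA.
by rewrite eIs (nth_map 0) ?hIs // (nth_map (0,false)) // sB.
Qed.

Lemma labn_opp (Sigma : eqType) (lam : 'I_12 -> cet Sigma) h :
  labn lam (oppn h) = compl (labn lam h).
Proof. by case: h => k [] //=; rewrite /labn /compl /= negbK; case: (lam _). Qed.

Lemma compl_neq (Sigma : eqType) (x : cet Sigma) : compl x = x -> False.
Proof. by case: x => a b [] /eqP; case: b. Qed.

Lemma key (Sigma : eqType) (P : seq (tile Sigma)) (lam : design Sigma Q3) (A B C : 'I_8) :
  scenario3 P Q3 -> design_in lam P -> A != B -> A != C -> B != C ->
  perm_eq (tile_at lam A) (tile_at lam B) -> perm_eq (tile_at lam A) (tile_at lam C) -> False.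
Proof.
move=> [_ _ iso] hd nAB nAC nBC pAB pAC.
have tp (X Y : 'I_8) : perm_eq (tile_at lam X) (tile_at lam Y) ->
    perm_eq (map (labn lam) (halfsn X)) (map (labn lam) (halfsn Y)).
  move=> pXY; have h1 := tile_perm lam X; have h2 := tile_perm lam Y.
  rewrite perm_sym in h1; exact: perm_trans (perm_trans h1 pXY) h2.
case: (match3 (tp _ _ pAB)) => s sP es.
case: (match3 (tp _ _ pAC)) => r rP er.
have bad h1 h2 : h1 \in allh -> h2 \in allh -> labn lam h1 = labn lam h2 ->
    badn (swn h1 h2) -> False.
  move=> i1 i2 el b; have rr := realH i1 i2 el hd. have ii := iso (HG h1 h2) isT rr erefl. exact: noiso b ii.
rewrite -val_eqE in nAB; rewrite -val_eqE in nAC; rewrite -val_eqE in nBC.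
have := master; rewrite /master_b => /allP /(_ _ (in_r8 A)) /allP /(_ _ (in_r8 B))
  /allP /(_ _ (in_r8 C)).
rewrite nAB nAC nBC => hc; have {hc} : chk A B C by exact: hc.
rewrite /chk => /allP /(_ _ sP) /allP /(_ _ rP).
have ps : perm_eq s (iota 0 3) by rewrite -mem_permutations.
have pr : perm_eq r (iota 0 3) by rewrite -mem_permutations.
have sk k : k < 3 -> nth 0 s k < 3.
  move=> hk; have : nth 0 s k \in s by apply: mem_nth; rewrite (perm_size ps) size_iota.
  by rewrite (perm_mem ps) mem_iota.
have rk k : k < 3 -> nth 0 r k < 3.
  move=> hk; have : nth 0 r k \in r by apply: mem_nth; rewrite (perm_size pr) size_iota.
  by rewrite (perm_mem pr) mem_iota.
have cond : condn A B C s r.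
  apply/allP => k; rewrite mem_iota /= => hk.
  apply/and3P; split; apply/eqP => e.
  - have := es k hk; rewrite -e labn_opp => /esym ee; exact: (compl_neq ee).
  - have := er k hk; rewrite -e labn_opp => /esym ee; exact: (compl_neq ee).
  - have := er k hk; rewrite -e labn_opp -es // => /esym ee; exact: (compl_neq ee).
rewrite cond /goodn => /hasP[k]; rewrite mem_iota /= => hk.
have hA := hn_allh A hk; have hB := hn_allh B (sk k hk); have hC := hn_allh C (rk k hk).
case: ifP => [b _|_]; first exact: (bad _ _ hA hB (es k hk) b).
case: ifP => [b _|_ b]; first exact: (bad _ _ hA hC (er k hk) b).
have e : labn lam (hn B (nth 0 s k)) = labn lam (hn C (nth 0 r k)) := etrans (esym (es k hk)) (er k hk).
exact: (bad _ _ hB hC e b).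
Qed.

Unset Implicit Arguments.

Theorem lemma5 (Sigma : eqType) (P : seq (tile Sigma)) (lam : design Sigma Q3) :
  is_pot P -> scenario3 P Q3 -> design_in lam P ->
  forall t : tile Sigma, tile_in t P ->
    #|[set v : 'I_(nv Q3) | perm_eq (tile_at lam v) t]| <= 2.
Proof.
move=> _ hs hd t _; rewrite leqNgt; apply/negP => h3.
set S := [set v : 'I_(nv Q3) | perm_eq (tile_at lam v) t] in h3.
have [A AS] : exists A, A \in S by apply/card_gt0P; apply: leq_ltn_trans h3.
rewrite (cardsD1 A) AS add1n ltnS in h3.
have [B BS] : exists B, B \in S :\ A by apply/card_gt0P; apply: ltnW h3.
rewrite (cardsD1 B) BS add1n ltnS in h3.
have [C CS] : exists C, C \in S :\ A :\ B by apply/card_gt0P.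
move: CS; rewrite !in_setD1 => /and3P[nCB nCA CS].
move: BS; rewrite in_setD1 => /andP[nBA BS].
move: AS CS BS; rewrite !inE => pA pC pB.
have pAB : perm_eq (tile_at lam A) (tile_at lam B).
  by apply: perm_trans pA _; rewrite perm_sym.
have pAC : perm_eq (tile_at lam A) (tile_at lam C).
  by apply: perm_trans pA _; rewrite perm_sym.
by apply: (key (A:=A) (B:=B) (C:=C) hs hd _ _ _ pAB pAC); rewrite eq_sym.
Qed.
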